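(* For every quandle $X$ and every subquandle $M\subseteq X$, the regular closure $c^{reg}_X(M)$ associated with the reflection $\pi_0\dashv U$ coincides with the pullback closure $c_X(M)$.
   Context: A quandle is a set $X$ with two binary operations $\lhd,\lhd^{-1}$ satisfying, for all $x,y,z\in X$: $x\lhd x = x = x\lhd^{-1}x$; $(x\lhd y)\lhd^{-1}y = x = (x\lhd^{-1}y)\lhd y$; $(x\lhd y)\lhd z = (x\lhd z)\lhd(y\lhd z)$ and $(x\lhd^{-1}y)\lhd^{-1}z = (x\lhd^{-1}z)\lhd^{-1}(y\lhd^{-1}z)$. Homomorphisms preserve both operations; $\mathsf{Qnd}$ is the resulting category. A quandle is trivial if $x\lhd y = x = x\lhd^{-1}y$ for all $x,y$; these form the full subcategory $\mathsf{Qnd}^*$, with inclusion $U$. For $x\in X$, the orbit $[x]_X$ is the set of all elements $x\lhd^{\alpha_1}x_1\cdots\lhd^{\alpha_n}x_n$ ($n\ge 0$, $x_i\in X$, $\lhd^{\alpha_i}\in\{\lhd,\lhd^{-1}\}$, bracketed from the left). The functor $\pi_0\colon\mathsf{Qnd}\to\mathsf{Qnd}^*$ sends $X$ to the trivial quandle of its orbits and is left adjoint to $U$, with unit $\eta_X\colon X\to U\pi_0(X)$, $x\mapsto[x]_X$. The pullback closure operator $c$: for a subquandle $M\subseteq X$ with inclusion $m$, $c_X(M)$ is the inverse image under $\eta_X$ of the image of $U\pi_0(m)$. The regular closure $c^{reg}_X(M)$ is the equalizer of $\eta_{X+_MX}\circ i$ and $\eta_{X+_MX}\circ j$, where $i,j\colon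 X\to X+_MX$ is the cokernel pair (pushout of $m$ along itself) of the inclusion $m\colon M\to X$ in $\mathsf{Qnd}$. *)

(* Defs.v *)
Set Implicit Arguments.


Record quandle := Quandle {
  qcar :> Type;
  qop : qcar -> qcar -> qcar;
  qinv : qcar -> qcar -> qcar;
  qidem : forall x, qop x x = x;
  qidem_inv : forall x, qinv x x = x;
  qright_inv1 : forall x y, qinv (qop x y) y = x;
  qright_inv2 : forall x y, qop (qinv x y) y = x;
  qdistr : forall x y z, qop (qop x y) z = qop (qop x z) (qop y z);
  qdistr_inv : forall x y z, qinv (qinv x y) z = qinv (qinv x z) (qinv y z)
}.

Record qhom (X Y : quandle) := QHom {
  qfun :> X -> Y;
  qhom_op : forall x y, qfun (qop X x y) = qop Y (qfun x) (qfun y);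
  qhom_inv : forall x y, qfun (qinv X x y) = qinv Y (qfun x) (qfun y)
}.

Definition is_subquandle (X : quandle) (M : X -> Prop) : Prop :=
  (forall x y, M x -> M y -> M (qop X x y)) /\
  (forall x y, M x -> M y -> M (qinv X x y)).

Inductive orbit (X : quandle) (x : X) : X -> Prop :=
| orbit_refl : orbit X x x
| orbit_op : forall y z, orbit X x y -> orbit X x (qop X y z)
| orbit_inv : forall y z, orbit X x y -> orbit X x (qinv X y z).

(** Unit of π0 ⊣ U: x ↦ [x]_X (orbits as subsets of X). *)
Definition eta (X : quandle) (x : X) : X -> Prop := orbit X x.

(** A morphism out of the subquandle M is determined by its
    values on elements of M, so  f ∘ m = g ∘ m  reads  forall a, M a -> f a = g a. *)
Definition is_cokernel_pair (X : quandle) (M : X -> Prop) (P : quandle)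
  (i j : qhom X P) : Prop :=
  (forall a, M a -> i a = j a) /\
  (forall (Q : quandle) (f g : qhom X Q),
      (forall a, M a -> f a = g a) ->
      exists h : qhom P Q,
        (forall x, h (i x) = f x) /\ (forall x, h (j x) = g x) /\
        (forall h' : qhom P Q,
            (forall x, h' (i x) = f x) -> (forall x, h' (j x) = g x) ->
            forall p, h' p = h p)).

(** Pullback closure: c_X(M) = η_X^{-1}( image of U π0(m) ) = {x | [x]_X = [a]_X for some a ∈ M}. *)
Definition pullback_closure (X : quandle) (M : X -> Prop) : X -> Prop :=
  fun x => exists a, M a /\ eta X x = eta X a.

(** Regular closure w.r.t. a cokernel pair (P,i,j): equalizer of η_P∘i and η_P∘j. *)
Definition regular_closure (X : quandle) (P : quandle) (i j : qhom X P) : X -> Prop :=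
  fun x => eta P (i x) = eta P (j x).

Arguments is_subquandle : clear implicits.
Arguments is_cokernel_pair : clear implicits.
Arguments pullback_closure : clear implicits.
Arguments regular_closure : clear implicits.
Arguments eta : clear implicits.

(* Main.v *)
Require Import Defs.
From Stdlib Require Import FunctionalExtensionality PropExtensionality.

Lemma orbit_trans (X : quandle) (a b c : X) : orbit X a b -> orbit X b c -> orbit X a c.
Proof. intros H1 H2; induction H2; [exact H1| apply orbit_op; auto | apply orbit_inv; auto]. Qed.

Lemma orbit_sym (X : quandle) (a b : X) : orbit X a b -> orbit X b a.
Proof.
  intros H; induction H.
  - apply orbit_refl.
  - eapply orbit_trans; [|exact IHorbit].
    rewrite <- (qright_inv1 X y z) at 2. apply orbit_inv, orbit_refl.
  - eapply orbit_trans; [|exact IHorbit].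
    rewrite <- (qright_inv2 X y z) at 2. apply orbit_op, orbit_refl.
Qed.

Lemma eta_eq (X : quandle) (u v : X) : orbit X u v -> eta X u = eta X v.
Proof.
  intros H. unfold eta. apply functional_extensionality; intro w.
  apply propositional_extensionality; split; intro Hw.
  - eapply orbit_trans; [apply orbit_sym; exact H| exact Hw].
  - eapply orbit_trans; [exact H| exact Hw].
Qed.

Lemma eta_orbit (X : quandle) (u v : X) : eta X u = eta X v -> orbit X v u.
Proof. intros H. change (eta X v u). rewrite <- H. apply orbit_refl. Qed.

Lemma hom_orbit (X Y : quandle) (h : qhom X Y) (a b : X) :
  orbit X a b -> orbit Y (h a) (h b).
Proof.
  intros H; induction H.
  - apply orbit_refl.
  - rewrite qhom_op. apply orbit_op; auto.
  - rewrite qhom_inv. apply orbit_inv; auto.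
Qed.

Definition trivQ : quandle.
Proof.
  refine (@Quandle Prop (fun x _ => x) (fun x _ => x) _ _ _ _ _ _); reflexivity.
Defined.

Lemma trivQ_orbit (p q : trivQ) : orbit trivQ p q -> p = q.
Proof. intros H; induction H; simpl; auto. Qed.

Lemma pc_op (X : quandle) (M : X -> Prop) (x y : X) :
  pullback_closure X M (qop X x y) = pullback_closure X M x.
Proof.
  unfold pullback_closure. rewrite (@eta_eq X x (qop X x y)).
  reflexivity. apply orbit_op, orbit_refl.
Qed.

Lemma pc_inv (X : quandle) (M : X -> Prop) (x y : X) :
  pullback_closure X M (qinv X x y) = pullback_closure X M x.
Proof.
  unfold pullback_closure. rewrite (@eta_eq X x (qinv X x y)).
  reflexivity. apply orbit_inv, orbit_refl.
Qed.

Theorem mainTheorem5 (X : quandle) (M : X -> Prop) (HM : is_subquandle X M)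
  (P : quandle) (i j : qhom X P) (Hcp : is_cokernel_pair X M P i j) :
  forall x : X, regular_closure X P i j x <-> pullback_closure X M x.
Proof.
  intros x. destruct Hcp as [Hij Hu]. unfold regular_closure. split.
  - intros Hr.
    set (f := @QHom X trivQ (fun _ => True) (fun _ _ => eq_refl) (fun _ _ => eq_refl)).
    set (g := @QHom X trivQ (pullback_closure X M) (@pc_op X M) (@pc_inv X M)).
    destruct (Hu trivQ f g) as [h [Hh1 [Hh2 _]]].
    { intros a Ha. simpl. apply propositional_extensionality; split; auto.
      intros _. exists a; auto. }
    apply eta_orbit in Hr. apply (@hom_orbit _ _ h) in Hr. apply trivQ_orbit in Hr.
    rewrite Hh1, Hh2 in Hr. simpl in Hr. rewrite Hr. exact I.
  - intros [a [Ha He]].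
    apply eta_orbit in He.
    rewrite <- (@eta_eq _ _ _ (@hom_orbit _ _ i _ _ He)), <- (@eta_eq _ _ _ (@hom_orbit _ _ j _ _ He)), Hij; auto.
Qed.
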